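(* Let $b\ge2$ be an integer and let $w$ be a fixed block of $b$-ary digits of length $p\ge1$. Let $s$ be any string of $b$-ary digits of length $\ell\ge0$. Let $$k_w^*(s)=\max_{|z|=p-1}k_w(sz),$$ where the maximum is over all strings $z$ of length $p-1$. Then for every integer $k\ge 1+k_w^*(s)$, $$\sum_{X:\;k_w(X)=k,\ X\text{ has prefix }s} b^{-|X|}=b^{p}\,b^{-\ell}.$$ In particular, for every $k\ge1$, $$Z_w(k)(b^{-1})=\sum_{X:\,k_w(X)=k}b^{-|X|}=b^p.$$
   Context: Strings are finite sequences over $\{0,\dots,b-1\}$, including the empty string $\epsilon$. $|X|$ is the length of $X$, and $sz$ is concatenation. $k_w(X)$ is the number of possibly overlapping occurrences of $w$ in $X$: indices $i$ with $x_i\dots x_{i+p-1}=w$. A string $X$ is $k$-admissible if $k_w(X)=k$. $N_w(k,l)$ is the number of $k$-admissible strings of length $l$, and $Z_w(k)=\sum_{l\ge0}N_w(k,l)t^l$. *)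

(* Defs.v *)
From HB Require Import structures.
From mathcomp Require Import all_boot all_order all_algebra.
From mathcomp Require Import all_classical all_reals all_analysis.
Set Implicit Arguments. Unset Strict Implicit. Unset Printing Implicit Defensive.
Import Order.TTheory GRing.Theory Num.Theory.

Definition kw (b : nat) (w X : seq 'I_b) : nat :=
  count (fun i => take (size w) (drop i X) == w) (iota 0 (size X)).

Definition kw_star (b : nat) (w s : seq 'I_b) : nat :=
  \max_(z : (size w).-1.-tuple 'I_b) kw w (s ++ z).

Definition Nw (b : nat) (w : seq 'I_b) (k l : nat) : nat :=
  #|[set X : l.-tuple 'I_b | kw w X == k]|.

(* Main.v *)
Require Import Defs.
From HB Require Import structures.
From mathcomp Require Import all_boot all_order all_algebra.
From mathcomp Require Import all_classical all_reals all_analysis.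
From mathcomp Require Import zify ring lra.
Import Order.TTheory GRing.Theory Num.Theory.
Local Open Scope classical_set_scope.
Local Open Scope ring_scope.
Lemma count_upd (r : seq nat) (P Q : pred nat) v (C : bool) : uniq r -> v \in r ->
  (forall i : nat, i \in r -> Q i = if i == v then C else P i) -> ~~ P v ->
  count Q r = (count P r + C)%N.
Proof.
move=> ur vr hQ nPv.
case: C hQ => hQ; last first.
  rewrite addn0; apply: eq_in_count => i /hQ ->; case: eqP => // ->; exact/esym/negbTE.
have -> : count Q r = count (predU P (pred1 v)) r.
  apply: eq_in_count => i /hQ ->; case: eqP => [->|] /=; first by rewrite eqxx orbT.
  by move=> /eqP /negbTE ->; rewrite orbF.
have := count_predUI P (pred1 v) r.
have -> : count (predI P (pred1 v)) r = 0%N.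
  apply/eqP; rewrite -leqn0 leqNgt -has_count; apply/hasP => -[i _ /= /andP[Pi /eqP iv]].
  by move: nPv; rewrite -iv Pi.
by rewrite addn0 (count_uniq_mem _ ur) vr => ->.
Qed.

Lemma neq_size (T : eqType) (s u : seq T) : size s <> size u -> (s == u) = false.
Proof. by move=> h; apply/negbTE/eqP => e; apply: h; rewrite e. Qed.

Lemma take_neq (T : eqType) n (s u : seq T) : (size s < n)%N -> size u = n -> (take n s == u) = false.
Proof. move=> h hu; apply: neq_size; rewrite size_take hu; case: ifP => h1; lia. Qed.


Lemma esum_sup (R : realType) (T : choiceType) (D : set T) (f : T -> R) (Ls : nat -> seq T) (t : R) :
  (forall x, 0 <= f x) -> (forall n, uniq (Ls n)) -> (forall n x, x \in Ls n -> D x) ->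
  (forall sF : seq T, [set` sF] `<=` D -> exists n, {subset sF <= Ls n}) ->
  (forall n, \sum_(x <- Ls n) f x <= t) ->
  (forall e, 0 < e -> exists n, t - e <= \sum_(x <- Ls n) f x) ->
  (\esum_(x in D) (f x)%:E = t%:E)%E.
Proof.
move=> f0 uL LD Fin Hle Hge.
apply/eqP; rewrite eq_le; apply/andP; split.
  apply: ge_ereal_sup => _ [F [finF FD] <-].
  have [sF eF] := (finite_seqP F).1 finF.
  have [n hn] : exists n, {subset sF <= Ls n} by apply: Fin; rewrite -eF.
  apply: (@le_trans _ _ (\sum_(x \in [set` Ls n]) (f x)%:E)%E).
    apply: lee_fsum_nneg_subset; [exact: finF | exact: finite_seq | | ].
      by move=> x; rewrite eF !inE /=; exact: hn.
    by move=> x _; rewrite lee_fin.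
  by rewrite -fsbig_seq // sumEFin lee_fin.
apply/lee_addgt0Pr => e e0.
have [n hn] := Hge e e0.
have : ((\sum_(x <- Ls n) f x)%:E <= \esum_(x in D) (f x)%:E)%E.
  apply: esum_ge; exists [set` Ls n].
    by split; [exact: finite_seq | move=> x /= /LD].
  by rewrite -fsbig_seq // sumEFin.
move=> h; apply: le_trans (_ : ((\sum_(x <- Ls n) f x)%:E + e%:E <= _)%E).
  by rewrite -EFinD lee_fin -lerBlDr.
by rewrite leeD2r.
Qed.

Section Comb.
Variable b : nat.
Variable w : seq 'I_b.
Hypothesis w1 : (1 <= size w)%N.
Local Notation p := (size w).

Definition cc (i : nat) (X : seq 'I_b) : bool := drop (size X - i) X == take i w.

Lemma cc0 X : cc 0 X.
Proof. by rewrite /cc subn0 drop_size take0. Qed.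

Lemma kw_rcons X a : kw w (rcons X a) = (kw w X + cc (size w) (rcons X a))%N.
Proof.
rewrite /kw size_rcons.

have Hlast : (take p (drop (size X) X) == w) = false.
  rewrite drop_size /=; apply/negbTE; apply/eqP => h; move: w1; rewrite -h //.
have -> : count (fun i => take p (drop i X) == w) (iota 0 (size X)) =
          count (fun i => take p (drop i X) == w) (iota 0 (size X).+1).
  by rewrite -addn1 iotaD count_cat /= Hlast add0n addn0.
apply: (@count_upd _ _ _ ((size X).+1 - p)%N).
- exact: iota_uniq.
- rewrite mem_iota; lia.
- move=> i; rewrite mem_iota add0n ltnS => hi /=. rewrite drop_rcons //.
  case: (leqP p (size X - i)) => hp.
    rewrite -cats1 takel_cat ?size_drop //.
    have -> : (i == (size X).+1 - p)%N = false by apply/negbTE; rewrite neq_ltn; apply/orP; left; lia.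
    by [].
  rewrite take_oversize ?size_rcons ?size_drop //.
  rewrite take_neq ?size_drop //.
  rewrite /cc size_rcons.
  case: (eqVneq i ((size X).+1 - p)%N) => [->|ne] /=.
    by rewrite take_size drop_rcons //; lia.
  apply: neq_size; rewrite size_rcons size_drop => h; have {}h : (size X - i).+1 = size w := h; apply/eqP: ne; lia.
- rewrite take_neq // size_drop. simpl. lia.
Qed.

Lemma cc_end Y i : cc p Y -> (i <= p)%N -> cc i Y = cc i w.
Proof.
rewrite /cc take_size => /eqP e ip.
have hY : (p <= size Y)%N.
  have := congr1 size e; rewrite size_drop => h; simpl in *; lia.
have -> : drop (size Y - i) Y = drop (p - i) (drop (size Y - p) Y).
  rewrite drop_drop; congr drop; lia.
by rewrite e.
Qed.

Lemma cc_rcons_eq i X a x0 : (i < p)%N ->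
  cc i.+1 (rcons X a) = cc i X && (a == nth x0 w i).
Proof.
move=> ip; rewrite /cc size_rcons subSS drop_rcons ?leq_subr //.
by rewrite (take_nth x0 ip) eqseq_rcons.
Qed.

Lemma kw_rcons_ge X a : (kw w X <= kw w (rcons X a))%N.
Proof. by rewrite kw_rcons leq_addr. Qed.

Variable R : realType.
Hypothesis b2 : (2 <= b)%N.
Local Notation q := (b%:R : R).

Lemma q_gt0 : 0 < q. Proof. by rewrite ltr0n; lia. Qed.
Lemma q_neq0 : q != 0. Proof. by rewrite gt_eqF // q_gt0. Qed.

Lemma sum_cc i X : (i < p)%N ->
  \sum_(a : 'I_b) ((cc i.+1 (rcons X a))%:R : R) = (cc i X)%:R.
Proof.
move=> ip.
have [x0 _] : exists x0 : 'I_b, True by case: (w) w1 => [|x ?] //; exists x.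
under eq_bigr => a _ do rewrite (cc_rcons_eq _ _ _ x0 ip).
rewrite (bigD1 (nth x0 w i)) //= eqxx andbT big1 ?addr0 // => a /negbTE ->.
by rewrite andbF.
Qed.

Definition Wp (X : seq 'I_b) : R := \sum_(0 <= i < p) q ^+ i * (cc i X)%:R.

Lemma Wp_end Y : cc p Y -> Wp Y = Wp w.
Proof.
move=> h; apply: eq_big_nat => i /andP[_ ip]; rewrite (cc_end _ _ h) //; exact: ltnW.
Qed.

Lemma Wp_ge0 X : 0 <= Wp X.
Proof. by apply: sumr_ge0 => i _; rewrite mulr_ge0 // exprn_ge0 // ltW // q_gt0. Qed.

Lemma geom_le n : \sum_(0 <= i < n) q ^+ i <= q ^+ n.
Proof.
elim: n => [|n IH]; first by rewrite big_geq // expr0.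
rewrite big_nat_recr //= exprS.
have h2 : 2 <= q by rewrite ler_nat.
have h0 : 0 <= q ^+ n by rewrite exprn_ge0 // ltW // q_gt0.
have h3 : 0 <= (q - 2) * q ^+ n by rewrite mulr_ge0 // subr_ge0.
lra.
Qed.

Lemma Wp_le X : Wp X <= q ^+ p.
Proof.
apply: le_trans (geom_le p); apply: ler_sum => i _.
rewrite -[Z in _ <= Z]mulr1; apply: ler_wpM2l.
  by rewrite exprn_ge0 // ltW // q_gt0.
by case: (cc i X).
Qed.

Definition Psi (j : nat) (X : seq 'I_b) : R :=
  if (j < kw w X)%N then q ^+ p else if kw w X == j then Wp X - Wp w else 0.

Definition L (j : nat) (X : seq 'I_b) : R := (kw w X == j)%:R.

Lemma Psi_step j X : q^-1 * \sum_(a : 'I_b) Psi j (rcons X a) = Psi j X + L j X.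
Proof.
have [p' hp] : exists p', size w = p'.+1 by exists (size w).-1; lia.
rewrite /Psi /L.
case: ltnP => hj.
  rewrite (gtn_eqF hj) addr0 (eq_bigr (fun _ => q ^+ p)); last first.
    by move=> a _; rewrite (leq_trans hj (kw_rcons_ge _ _)).
  by rewrite sumr_const card_ord -[q ^+ p *+ b]mulr_natl mulrA mulVf ?mul1r // q_neq0.
case: eqP => hk; last first.
  rewrite addr0 big1 ?mulr0 // => a _.
  have hlt : (kw w X < j)%N by rewrite ltn_neqAle hj andbT; apply/eqP.
  rewrite kw_rcons; case: (boolP (cc p (rcons X a))) => hc /=.
    rewrite addn1 ltnNge hlt /=; case: eqP => // _; rewrite Wp_end // subrr //.
  rewrite addn0 ltnNge (ltnW hlt) /= (ltn_eqF hlt) //.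
rewrite (eq_bigr (fun a => q ^+ p * (cc p (rcons X a))%:R + Wp (rcons X a) - Wp w)); last first.
  move=> a _; rewrite kw_rcons hk; case: (boolP (cc p (rcons X a))) => hc /=.
    by rewrite addn1 ltnSn mulr1 Wp_end // addrK.
  by rewrite addn0 ltnn eqxx mulr0 add0r.
set Ww := Wp w.
rewrite sumrB big_split /= -mulr_sumr sumr_const card_ord -[Ww *+ b]mulr_natl.
rewrite hp sum_cc; last by rewrite hp.
rewrite /Wp hp.
have -> : \sum_(a : 'I_b) \sum_(0 <= i < p'.+1) q ^+ i * (cc i (rcons X a))%:R =
          q + q * \sum_(0 <= i < p') q ^+ i * (cc i X)%:R.
  rewrite exchange_big big_nat_recl //=; congr (_ + _).
    under eq_bigr do rewrite cc0 expr0 mul1r.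
    by rewrite sumr_const card_ord mulr1n.
  rewrite mulr_sumr; apply: eq_big_nat => i /andP[_ hi].
  rewrite -mulr_sumr sum_cc; last by rewrite hp; lia.
  by rewrite exprS mulrA.
rewrite big_nat_recr //= exprS.
set S := \sum_(0 <= i < p') _.
set t := b%:R ^+ p'.
field; exact: q_neq0.
Qed.

Lemma Psi_le j X : Psi j X <= q ^+ p.
Proof.
rewrite /Psi; case: ifP => _ //; case: ifP => _.
  by rewrite lerBlDr (le_trans (Wp_le X)) // lerDl Wp_ge0.
by rewrite exprn_ge0 // ltW // q_gt0.
Qed.

Lemma Psi_ge j X : q ^+ p - 2 * q ^+ p * (kw w X <= j)%N%:R <= Psi j X.
Proof.
rewrite /Psi; case: ltnP => h; first by rewrite mulr0 subr0.
rewrite mulr1.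
have h1 := Wp_ge0 X; have h2 := Wp_le w; have h3 : 0 <= q ^+ p by rewrite exprn_ge0 // ltW // q_gt0.
case: ifP => _; lra.
Qed.

Lemma Psi_ge' j X : - q ^+ p <= Psi j X.
Proof.
apply: le_trans (Psi_ge j X).
have h3 : 0 <= q ^+ p by rewrite exprn_ge0 // ltW // q_gt0.
case: (kw w X <= j)%N => /=; lra.
Qed.

Fixpoint allseq (n : nat) : seq (seq 'I_b) :=
  if n is m.+1 then [seq a :: t | a <- index_enum 'I_b, t <- allseq m] else [:: [::]].

Definition Av (f : seq 'I_b -> R) (n : nat) (X : seq 'I_b) : R :=
  q ^- n * \sum_(t <- allseq n) f (X ++ t).

Lemma Av0 f X : Av f 0 X = f X.
Proof. by rewrite /Av /= expr0 invr1 mul1r big_seq1 cats0. Qed.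

Lemma Av_S f n X : Av f n.+1 X = q^-1 * \sum_(a : 'I_b) Av f n (rcons X a).
Proof.
rewrite /Av /= big_allpairs_dep exprS invfM -mulrA; congr (_ * _).
rewrite mulr_sumr; apply: eq_bigr => a _.
by congr (_ * _); apply: eq_bigr => t _; rewrite cat_rcons.
Qed.

Lemma eq_Av f g n X : (forall Y, f Y = g Y) -> Av f n X = Av g n X.
Proof. by move=> e; rewrite /Av; under eq_bigr do rewrite e. Qed.

Lemma Av_le f g n X : (forall Y, f Y <= g Y) -> Av f n X <= Av g n X.
Proof.
move=> e; rewrite /Av; apply: ler_wpM2l; last exact: ler_sum.
by rewrite invr_ge0 exprn_ge0 // ltW // q_gt0.
Qed.

Lemma Av_lin c d f n X : Av (fun Y => c + d * f Y) n X = c + d * Av f n X.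
Proof.
elim: n X => [|n IH] X; first by rewrite !Av0.
rewrite !Av_S; under eq_bigr do rewrite IH.
rewrite big_split /= sumr_const card_ord -mulr_sumr -[c *+ b]mulr_natl.
rewrite mulrDr !mulrA mulVf ?q_neq0 // mul1r; congr (_ + _).
by rewrite [_^-1 * d]mulrC.
Qed.

Lemma Av_const c n X : Av (fun _ => c) n X = c.
Proof.
rewrite (@eq_Av _ (fun Y => c + 0 * (fun _ => 0) Y)); last by move=> Y; rewrite mul0r addr0.
by rewrite Av_lin mul0r addr0.
Qed.

Lemma Av_iter j n X : Av (Psi j) n X = Psi j X + \sum_(m < n) Av (L j) m X.
Proof.
elim: n X => [|n IH] X; first by rewrite Av0 big_ord0 addr0.
rewrite Av_S; under eq_bigr do rewrite IH.
rewrite big_split /= mulrDr Psi_step big_ord_recl Av0 -addrA; congr (_ + (_ + _)).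
rewrite exchange_big mulr_sumr; apply: eq_bigr => m _.
by rewrite Av_S.
Qed.

Definition Lle (j : nat) (X : seq 'I_b) : R := (kw w X <= j)%N%:R.

Lemma sum_eq_le (k j : nat) : \sum_(j0 < j.+1) ((k == j0)%:R : R) = (k <= j)%N%:R.
Proof.
elim: j => [|j IH]; first by rewrite big_ord1 leqn0.
rewrite big_ord_recr /= IH (leq_eqVlt k j.+1) ltnS.
case: (eqVneq k j.+1) => [->|ne] /=; first by rewrite ltnn add0r.
by rewrite addr0.
Qed.

Lemma Av_sumL j m X : \sum_(j0 < j.+1) Av (L j0) m X = Av (Lle j) m X.
Proof.
rewrite /Av -mulr_sumr exchange_big /=; congr (_ * _); apply: eq_bigr => t _.
exact: sum_eq_le.
Qed.

Lemma Av_mono j m X : Av (Lle j) m.+1 X <= Av (Lle j) m X.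
Proof.
elim: m X => [|m IH] X.
  rewrite Av_S Av0; under eq_bigr do rewrite Av0.
  rewrite ler_pdivrMl ?q_gt0 //.
  apply: le_trans (_ : \sum_(a : 'I_b) Lle j X <= _).
    apply: ler_sum => a _; rewrite /Lle ler_nat.
    have h := kw_rcons_ge X a.
    case: (leqP (kw w (rcons X a)) j) => h1 //.
    by rewrite (leq_trans h h1).
  by rewrite sumr_const card_ord -[Lle j X *+ b]mulr_natl.
rewrite Av_S [leRHS]Av_S; apply: ler_wpM2l; first by rewrite invr_ge0 ltW // q_gt0.
exact: ler_sum.
Qed.

Lemma Av_mono' j m n X : (m <= n)%N -> Av (Lle j) n X <= Av (Lle j) m X.
Proof.
move=> /subnK <-; elim: (n - m)%N => [|d IH]; first by rewrite add0n.
by rewrite addSn (le_trans (Av_mono _ _ _) IH).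
Qed.

Lemma tail_bound j X n : n%:R * Av (Lle j) n X <= (j.+1)%:R * (2 * q ^+ p).
Proof.
apply: le_trans (_ : \sum_(m < n) Av (Lle j) m X <= _).
  have -> : n%:R * Av (Lle j) n X = \sum_(m < n) Av (Lle j) n X.
    by rewrite sumr_const card_ord mulr_natl.
  apply: ler_sum => m _.
  by apply: Av_mono'; exact: ltnW.
under eq_bigr do rewrite -Av_sumL.
rewrite exchange_big /=.
have -> : (j.+1)%:R * (2 * q ^+ p) = \sum_(j0 < j.+1) (2 * q ^+ p).
  by rewrite sumr_const card_ord mulr_natl.
apply: ler_sum => j0 _.
have := Av_iter j0 n X.
have h1 : Av (Psi j0) n X <= q ^+ p.
  by rewrite -[leRHS](Av_const (q ^+ p) n X); apply: Av_le => Y; exact: Psi_le.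
have h2 := Psi_ge' j0 X.
lra.
Qed.

Lemma main_bounds j s n : (kw w s < j)%N ->
  \sum_(m < n) Av (L j) m s <= q ^+ p /\
  q ^+ p - 2 * q ^+ p * Av (Lle j) n s <= \sum_(m < n) Av (L j) m s.
Proof.
move=> hs.
have P0 : Psi j s = 0 by rewrite /Psi ltnNge (ltnW hs) /= (ltn_eqF hs).
have := Av_iter j n s; rewrite P0 add0r => <-; split.
  by rewrite -[leRHS](Av_const (q ^+ p) n s); apply: Av_le => Y; exact: Psi_le.
rewrite -mulNr -Av_lin; apply: Av_le => Y; rewrite mulNr; exact: Psi_ge.
Qed.

Lemma mem_allseq n t : (t \in allseq n) = (size t == n).
Proof.
elim: n t => [|n IH] t; first by case: t.
apply/allpairsP/idP => [[[x y] [_ /= hy ->]]|].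
  by rewrite /= eqSS -IH.
case: t => [|a t] //=; rewrite eqSS -IH => ht.
by exists (a, t); split => //; exact: mem_index_enum.
Qed.

Lemma uniq_allseq n : uniq (allseq n).
Proof.
elim: n => [|n IH] //=; apply: allpairs_uniq => //; first exact: index_enum_uniq.
by move=> [x y] [x' y'] _ _ /= [-> ->].
Qed.

Fixpoint U (n : nat) : seq (seq 'I_b) :=
  if n is m.+1 then U m ++ allseq m else [::].

Lemma mem_U n t : (t \in U n) = (size t < n)%N.
Proof.
elim: n => [|n IH] //=; rewrite mem_cat IH mem_allseq ltnS [(size t <= n)%N]leq_eqVlt.
by rewrite orbC.
Qed.

Lemma uniq_U n : uniq (U n).
Proof.
elim: n => [|n IH] //=; rewrite cat_uniq IH uniq_allseq /= andbT.
apply/hasPn => t; rewrite mem_allseq mem_U => /eqP ->; by rewrite ltnn.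
Qed.

Lemma sum_U (F : seq 'I_b -> R) n :
  \sum_(t <- U n) F t = \sum_(m < n) \sum_(t <- allseq m) F t.
Proof.
elim: n => [|n IH]; first by rewrite big_nil big_ord0.
by rewrite /= big_cat IH big_ord_recr.
Qed.

Definition Ls (s : seq 'I_b) (k n : nat) : seq (seq 'I_b) :=
  [seq s ++ t | t <- U n & kw w (s ++ t) == k].

Lemma sum_Ls s k n :
  \sum_(Y <- Ls s k n) q ^- size Y = q ^- size s * \sum_(m < n) Av (L k) m s.
Proof.
rewrite big_map big_filter big_mkcond sum_U mulr_sumr; apply: eq_bigr => m _.
rewrite /Av mulrA -invfM -exprD mulr_sumr /=.
rewrite big_seq [RHS]big_seq; apply: eq_bigr => t; rewrite mem_allseq => /eqP ht.
by rewrite /L size_cat ht; case: (kw w (s ++ t) == k); rewrite ?mulr1 ?mulr0.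
Qed.

Lemma Nw_Av k l : (Nw w k l)%:R * q ^- l = Av (L k) l [::].
Proof.
rewrite /Av mulrC; congr (_ * _).
rewrite /Nw -sum1dep_card natr_sum.
have pe : perm_eq [seq val X | X <- index_enum (l.-tuple 'I_b)] (allseq l).
  apply: uniq_perm; first by rewrite map_inj_uniq ?index_enum_uniq //; exact: val_inj.
    exact: uniq_allseq.
  move=> t; rewrite mem_allseq; apply/mapP/idP => [[X _ ->]|ht].
    by rewrite size_tuple.
  by exists (Tuple ht) => //; exact: mem_index_enum.
rewrite -(perm_big _ pe) big_map big_mkcond /=; apply: eq_bigr => X _.
by rewrite /L /=; case: (kw w X == k).
Qed.

Lemma kw_cat_ge s z : (kw w s <= kw w (s ++ z))%N.
Proof.
elim/last_ind: z => [|z a IH]; first by rewrite cats0.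
by rewrite -rcons_cat (leq_trans IH (kw_rcons_ge _ _)).
Qed.

Lemma kw_le_star s : (kw w s <= kw_star w s)%N.
Proof.
have [x0 _] : exists x0 : 'I_b, True by case: (w) w1 => [|x ?] //; exists x.
apply: leq_trans (kw_cat_ge s (nseq_tuple (size w).-1 x0)) _.
rewrite /kw_star; exact: (leq_bigmax (nseq_tuple (size w).-1 x0)).
Qed.

Lemma qV_ge0 n : 0 <= q ^- n.
Proof. by rewrite invr_ge0 exprn_ge0 // ltW // q_gt0. Qed.

Lemma G_bounds s k : (kw w s < k)%N ->
  (forall n, q ^- size s * \sum_(m < n) Av (L k) m s <= q ^+ p * q ^- size s) /\
  (forall e, 0 < e -> exists n,
     q ^+ p * q ^- size s - e <= q ^- size s * \sum_(m < n) Av (L k) m s).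
Proof.
move=> hs; split.
  move=> n; rewrite mulrC; apply: ler_wpM2r; first exact: qV_ge0.
  exact: (main_bounds k s n hs).1.
move=> e e0.
set K := q ^- size s * (2 * q ^+ p).
set C := (k.+1)%:R * (2 * q ^+ p).
have K0 : 0 <= K by rewrite mulr_ge0 ?qV_ge0 // mulr_ge0 // exprn_ge0 // ltW // q_gt0.
have C0 : 0 <= C by rewrite mulr_ge0 // mulr_ge0 // exprn_ge0 // ltW // q_gt0.
have KC0 : 0 <= K * C / e by rewrite divr_ge0 ?mulr_ge0 // ltW.
have hn := archi_boundP KC0.
set n := Num.Def.archi_bound _ in hn.
have n0 : 0 < (n%:R : R) by apply: le_lt_trans hn.
exists n.
have h1 := tail_bound k s n.
set a := Av (Lle k) n s in h1 *.
have hKa : K * a <= e.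
  rewrite -(ler_pM2l n0).
  apply: le_trans (_ : K * C <= _).
    by rewrite mulrCA; apply: ler_wpM2l => //; exact: h1.
  by have := ltW hn; rewrite ler_pdivrMr.
have := (main_bounds k s n hs).2; rewrite -/a => h2.
apply: le_trans (_ : q ^- size s * (q ^+ p - 2 * q ^+ p * a) <= _); last first.
  by apply: ler_wpM2l => //; exact: qV_ge0.
have -> : q ^- size s * (q ^+ p - 2 * q ^+ p * a) = q ^+ p * q ^- size s - K * a.
  by rewrite /K; ring.
by rewrite lerB.
Qed.

Lemma part1 s k : (kw w s < k)%N ->
  (\esum_(X in [set X : seq 'I_b | kw w X = k /\ prefix s X]) (q ^- size X)%:E
   = (q ^+ p * q ^- size s)%:E)%E.
Proof.
move=> hs; have [Gup Glo] := G_bounds s k hs.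
apply: (@esum_sup R _ _ _ (Ls s k)).
- by move=> x; exact: qV_ge0.
- move=> n; rewrite map_inj_uniq ?filter_uniq ?uniq_U //.
  by move=> x y /eqP; rewrite eqseq_cat // eqxx /= => /eqP.
- move=> n x /mapP [t]; rewrite mem_filter => /andP[/eqP hk _] ->; split => //.
  exact: prefix_prefix.
- move=> sF hF; exists (\max_(Y <- sF) size Y).+1 => Y hY.
  have [hk hp] := hF Y hY.
  have eY : Y = s ++ drop (size s) Y.
    by move: hp; rewrite prefixE => /eqP e; rewrite -{1}(cat_take_drop (size s) Y) e.
  rewrite eY; apply/mapP; exists (drop (size s) Y) => //.
  rewrite mem_filter -eY hk eqxx mem_U size_drop /= ltnS.
  apply: leq_trans (leq_subr _ _) _.
  exact: (leq_bigmax_seq (F := fun Y : seq 'I_b => size Y) Y hY).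
- by move=> n; rewrite sum_Ls; exact: Gup.
- by move=> e e0; have [n hn] := Glo e e0; exists n; rewrite sum_Ls.
Qed.

Lemma part2 k : (0 < k)%N ->
  (\sum_(0 <= l <oo) ((Nw w k l)%:R * q ^- l)%:E = (q ^+ p)%:E)%E.
Proof.
move=> k0; have [Gup Glo] := G_bounds [::] k k0.
rewrite nneseries_esumT; last by move=> l; rewrite lee_fin mulr_ge0 ?qV_ge0.
apply: (@esum_sup R _ _ _ (fun n => index_iota 0 n)).
- by move=> l; rewrite mulr_ge0 ?qV_ge0.
- by move=> n; exact: iota_uniq.
- by [].
- move=> sF _; exists (\max_(x <- sF) x).+1 => x hx.
  rewrite mem_index_iota /= ltnS.
  exact: (leq_bigmax_seq (F := fun x : nat => x) x hx).
- move=> n; rewrite big_mkord; under eq_bigr do rewrite Nw_Av.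
  by have := Gup n; rewrite /= expr0 invr1 mul1r mulr1.
- move=> e e0; have [n hn] := Glo e e0; exists n.
  rewrite big_mkord; under eq_bigr do rewrite Nw_Av.
  by move: hn; rewrite /= expr0 invr1 mul1r mulr1.
Qed.
End Comb.

Theorem theorem3 (R : realType) (b : nat) (w : seq 'I_b) :
  (2 <= b)%N -> (1 <= size w)%N ->
  (forall (s : seq 'I_b) (k : nat), (1 + kw_star w s <= k)%N ->
     (\esum_(X in [set X : seq 'I_b | kw w X = k /\ prefix s X])
        ((b%:R : R) ^- size X)%:E)
     = ((b%:R : R) ^+ size w * (b%:R : R) ^- size s)%:E)
  /\
  (forall k : nat, (1 <= k)%N ->
     (\sum_(0 <= l <oo) ((Nw w k l)%:R * (b%:R : R) ^- l)%:E
        = ((b%:R : R) ^+ size w)%:E)%E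
     /\
     (\esum_(X in [set X : seq 'I_b | kw w X = k]) ((b%:R : R) ^- size X)%:E)
        = ((b%:R : R) ^+ size w)%:E).
Proof.
move=> b2 w1; split.
  move=> s k hk; apply: (@part1 b w w1 R b2 s k).
  have := @kw_le_star b w w1 s; lia.
move=> k k1; split; first exact: (@part2 b w w1 R b2 k k1).
rewrite (_ : [set X | kw w X = k] = [set X | kw w X = k /\ prefix [::] X]); last first.
  by apply/seteqP; split => X /=; [move=> ->; split; [|exact: prefix0s] | case].
by rewrite (@part1 b w w1 R b2 [::] k) //= expr0 invr1 mulr1.
Qed.
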